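(* There is an absolute constant $C>0$ such that for every integer $q\geq 4$ and every positive integer $n$, \[ F_{q,q-1}(n)\leq G_{q,q-1}(n)\leq n^{1+C/\sqrt{\log q}}. \] In particular, for every fixed $\varepsilon>0$ there is $q_0(\varepsilon)$ such that for all integers $q\geq q_0(\varepsilon)$ and all positive integers $n$, $F_{q,q-1}(n)\leq G_{q,q-1}(n)\leq n^{1+\varepsilon}$.
   Context: Logarithms are to base $2$, and $[n]=\{1,\dots,n\}$. For integers $q\geq r\geq 1$ and $x,y\in\mathbb{R}^q$, write $x<_r y$ if there are at least $r$ coordinates $i\in[q]$ with $x_i<y_i$. $F_{q,r}(n)$ is the maximum $N$ such that there exist vectors $x_1,\dots,x_N\in[n]^q$ with $x_a<_r x_b$ for all $1\leq a<b\leq N$ (an $r$-increasing sequence). $G_{q,r}(n)$ is the maximum size of a set $S\subseteq[n]^q$ such that for all distinct $x,y\in S$, either $x<_r y$ or $y<_r x$ (an $r$-comparable set). *)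

(* Defs.v *)
From mathcomp Require Import all_boot.
From Stdlib Require Import Reals.
Set Implicit Arguments. Unset Strict Implicit. Unset Printing Implicit Defensive.

(* Points of [n]^q : functions 'I_q -> 'I_n ('I_n = {0,..,n-1}, an order-
   preserving relabelling of [n] = {1,..,n}). *)
Definition pt (q n : nat) := {ffun 'I_q -> 'I_n}.

Definition rlt (q n r : nat) (x y : pt q n) : bool :=
  r <= #|[set i : 'I_q | (x i < y i)%N]|.

Definition r_increasing (q n r : nat) (s : seq (pt q n)) : bool :=
  pairwise (@rlt q n r) s.

Definition r_comparable (q n r : nat) (S : {set pt q n}) : bool :=
  [forall x in S, forall y in S, (x != y) ==> (rlt r x y || rlt r y x)].

(* N ranges over 0..n^q; for r >= 1 an r-increasing sequence has distinct
   entries (x <_r x is false), so this bound is no restriction. *)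
Definition F (q r n : nat) : nat :=
  \max_(N < #|{: pt q n}|.+1 |
        [exists s : N.-tuple (pt q n), r_increasing r (tval s)]) (N : nat).

Definition G (q r n : nat) : nat :=
  \max_(S : {set pt q n} | r_comparable r S) #|S|.

(* Main.v *)
Require Import Defs.
From mathcomp Require Import all_boot.
From Stdlib Require Import Reals.
From HB Require Import structures.
From Stdlib Require Import Lra.
From mathcomp Require Import zify.
Set Implicit Arguments. Unset Strict Implicit. Unset Printing Implicit Defensive.

(* Proof outline: for q >= 4 an r-comparable set (r = q-1) is totally ordered by <_{q-1};
   an entropy-type induction (splitting the ordered set into halves) shows
   sum_i sum_v c log c <= kappa q N log N with kappa = 2/(k+1), whence N <= n^((k+1)/(k-1)). *)

Lemma three_sets (q : nat) (A B C : {set 'I_q}) :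
  #|~: A| + #|~: B| + #|~: C| < q -> exists i, [/\ i \in A, i \in B & i \in C].
Proof.
move=> H.
case: (set_0Vmem (A :&: B :&: C)) => [E|[i]]; last first.
  by rewrite !inE => /andP[/andP[? ?] ?]; exists i.
have : ~: A :|: ~: B :|: ~: C = [set: 'I_q].
  by rewrite -!setCI E setC0.
move=> E2.
have : #|~: A :|: ~: B :|: ~: C| <= #|~: A| + #|~: B| + #|~: C|.
  apply: leq_trans (leq_card_setU _ _) _.
  by rewrite leq_add2r leq_card_setU.
rewrite E2 cardsT card_ord => H2. exfalso. lia.
Qed.

Lemma rlt_compl q n (x y : pt q n) :
  rlt (q - 1) x y -> #|~: [set i | x i < y i]| <= 1.
Proof.
rewrite /rlt => H. have := cardsC [set i | x i < y i].
rewrite card_ord => E. move: H E. set c := #|_|. set d := #|_|. move=> H E. lia.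
Qed.

Lemma rlt_irr q n (x : pt q n) : 1 < q -> ~~ rlt (q - 1) x x.
Proof.
move=> Hq; rewrite /rlt -ltnNge.
have -> : [set i | x i < x i] = set0 by apply/setP => i; rewrite !inE ltnn.
rewrite cards0; lia.
Qed.

Lemma rlt_asym q n (x y : pt q n) : 2 < q -> rlt (q - 1) x y -> ~~ rlt (q - 1) y x.
Proof.
move=> Hq H1; apply/negP => H2.
have H3 := rlt_compl H1; have H4 := rlt_compl H2.
have [i [Hi1 Hi2 _]] : exists i, [/\ i \in [set i | x i < y i], i \in [set i | y i < x i] & i \in [set: 'I_q]].
  apply: three_sets. rewrite setCT cards0. move: H3 H4.
  set c1 := #|~: [set i | x i < y i]|. set c2 := #|~: [set i | y i < x i]|. move=> *. lia.
move: Hi1 Hi2; rewrite !inE => a b. by move: (ltn_trans a b); rewrite ltnn.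
Qed.

Lemma rlt_nocycle q n (x y z : pt q n) : 3 < q -> rlt (q - 1) x y -> rlt (q - 1) y z ->
  ~~ rlt (q - 1) z x.
Proof.
move=> Hq H1 H2; apply/negP => H3.
have := rlt_compl H1; have := rlt_compl H2; have := rlt_compl H3 => H4 H5 H6.
have [i [Hi1 Hi2 Hi3]] : exists i, [/\ i \in [set i | x i < y i], i \in [set i | y i < z i] & i \in [set i | z i < x i]].
  apply: three_sets. move: H4 H5 H6.
  set c1 := #|~: [set i | x i < y i]|. set c2 := #|~: [set i | y i < z i]|.
  set c3 := #|~: [set i | z i < x i]|. move=> *. lia.
move: Hi1 Hi2 Hi3; rewrite !inE => a b c.
by move: (ltn_trans a (ltn_trans b c)); rewrite ltnn.
Qed.

Definition comparable q n (A : {set pt q n}) :=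
  forall x y, x \in A -> y \in A -> x != y -> rlt (q - 1) x y || rlt (q - 1) y x.

Lemma r_comparableP q n (A : {set pt q n}) : r_comparable (q - 1) A -> comparable A.
Proof.
move=> /forall_inP H x y xA yA nxy.
by have /forall_inP/(_ y yA)/implyP := H x xA; apply.
Qed.

Lemma comparable_sub q n (A B : {set pt q n}) : B \subset A -> comparable A -> comparable B.
Proof. by move=> /subsetP s H x y xB yB; apply: H; apply: s. Qed.

Definition leR q n (x y : pt q n) := (x == y) || rlt (q - 1) x y.

Lemma split_lemma q n (A : {set pt q n}) : 3 < q -> comparable A ->
  exists P Q : {set pt q n}, [/\ A = P :|: Q, P :&: Q = set0, #|P| = #|A| ./2,
     #|Q| = #|A| - #|A|./2 &
     forall x y, x \in P -> y \in Q -> rlt (q - 1) x y].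
Proof.
move=> Hq HA.
pose s := sort (@leR q n) (enum A).
have allA : all (mem A) (enum A) by apply/allP => x; rewrite mem_enum.
have tot : {in mem A &, total (@leR q n)}.
  move=> x y xA yA; rewrite /leR; case: (eqVneq x y) => [->|nxy]; first by [].
  by rewrite /=; apply: HA.
have tr : {in mem A & &, transitive (@leR q n)}.
  move=> y x z xA yA zA /orP[/eqP->//|H1] /orP[/eqP<-|H2]; first by rewrite /leR H1 orbT.
  rewrite /leR; case: (eqVneq x z) => [exz|nxz] /=.
    by subst z; move: (rlt_asym (ltnW Hq) H1); rewrite H2.
  have := HA x z yA zA nxz; case/orP => // H3.
  by move: (rlt_nocycle Hq H1 H2); rewrite H3.
have so : sorted (@leR q n) s by apply: (sort_sorted_in tot); exact: allA.
have allS : all (mem A) s by apply/allP => x; rewrite mem_sort mem_enum.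
have pw : pairwise (@leR q n) s by rewrite -(sorted_pairwise_in tr allS).
have us : uniq s by rewrite sort_uniq enum_uniq.
have sz : size s = #|A| by rewrite size_sort cardE.
pose h := #|A| ./2.
exists [set x in take h s], [set x in drop h s].
have ucat : uniq (take h s ++ drop h s) by rewrite cat_take_drop.
split.
- apply/setP => x; rewrite !inE -mem_cat cat_take_drop mem_sort mem_enum //.
- apply/setP => x; rewrite !inE; apply/negP => /andP[a b].
  move: ucat; rewrite cat_uniq => /and3P[_ /hasPn H _].
  by move: (H x b); rewrite a.
- rewrite cardsE (card_uniqP _); last by apply: (subseq_uniq (take_subseq _ _)).
  rewrite size_take sz /h; case: ifP => //; lia.
- rewrite cardsE (card_uniqP _); last by apply: (subseq_uniq (drop_subseq _ _)).
  by rewrite size_drop sz.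
- move=> x y; rewrite !inE => xP yQ.
  move: pw; rewrite -(cat_take_drop h s) pairwise_cat => /and3P[/allrelP H _ _].
  have := H x y xP yQ; rewrite /leR; case: eqP => //= exy.
  subst y. move: ucat; rewrite cat_uniq => /and3P[_ /hasPn H' _].
  by move: (H' x yQ); rewrite xP.
Qed.

Lemma card_sum (T : finType) (A : {set T}) (p : pred T) :
  #|[set x in A | p x]| = \sum_(x in A) (p x : nat).
Proof.
rewrite -sum1dep_card [LHS]big_mkcond [RHS]big_mkcond /=.
apply: eq_bigr => x _; case: (x \in A) => //=; by case: (p x).
Qed.

Definition cnt q n (A : {set pt q n}) (i : 'I_q) (v : 'I_n) := #|[set x in A | x i == v]|.

Lemma cnt_sum_pred q n (A : {set pt q n}) i (p : pred 'I_n) :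
  \sum_(v < n | p v) cnt A i v = \sum_(x in A) (p (x i) : nat).
Proof.
rewrite (eq_bigr (fun v => \sum_(x in A) ((x i == v) : nat))); last first.
  by move=> v _; exact: (card_sum A (fun x => x i == v)).
rewrite exchange_big /=; apply: eq_bigr => x _.
rewrite big_mkcond (bigD1 (x i)) //= eqxx big1 ?addn0; first by case: (p (x i)).
by move=> v; rewrite eq_sym => /negbTE ->; case: (p v).
Qed.

Lemma cnt_sum q n (A : {set pt q n}) i : \sum_(v < n) cnt A i v = #|A|.
Proof.
have := cnt_sum_pred A i predT; rewrite /= => ->.
by rewrite -sum1_card; apply: eq_bigr.
Qed.

Lemma cnt_U q n (P Q : {set pt q n}) i v : P :&: Q = set0 ->
  cnt (P :|: Q) i v = cnt P i v + cnt Q i v.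
Proof.
move=> H; rewrite /cnt -cardsUI.
have -> : [set x in P | x i == v] :&: [set x in Q | x i == v] = set0.
  apply/setP => x; rewrite !inE; apply/negP => /andP[/andP[a _] /andP[b _]].
  by have := in_set0 x; rewrite -H !inE a b.
rewrite cards0 addn0; apply: eq_card => x; rewrite !inE.
by rewrite andb_orl.
Qed.

Lemma cnt_le1 q n (A : {set pt q n}) i v : #|A| <= 1 -> cnt A i v <= 1.
Proof.
move=> H; apply: leq_trans H; apply: subset_leq_card; apply/subsetP => x.
by rewrite inE => /andP[].
Qed.

Definition Rinv q n (P Q : {set pt q n}) (i : 'I_q) :=
  \sum_(x in P) \sum_(y in Q) ((y i <= x i) : nat).

Lemma Rinv_total q n (P Q : {set pt q n}) :
  (forall x y, x \in P -> y \in Q -> rlt (q - 1) x y) ->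
  \sum_(i < q) Rinv P Q i <= #|P| * #|Q|.
Proof.
move=> H; rewrite /Rinv exchange_big /=.
rewrite -sum1_card big_distrl /=; apply: leq_sum => x xP.
rewrite exchange_big /= mul1n -sum1_card; apply: leq_sum => y yQ.
have := rlt_compl (H x y xP yQ).
move=> H2; apply: leq_trans H2 => /=.
rewrite [X in _ <= X](_ : _ = #|[set i | y i <= x i]|); last first.
  by apply: eq_card => i; rewrite !inE -leqNgt.
rewrite -(sum1dep_card (fun i => y i <= x i)) [X in _ <= X]big_mkcond /=; apply: leq_sum => i _.
by case: (y i <= x i).
Qed.

Lemma Rinv_lower q n (P Q : {set pt q n}) i (s : nat) :
  (\sum_(x in P) ((s <= x i) : nat)) * (\sum_(y in Q) ((y i <= s) : nat)) <= Rinv P Q i.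
Proof.
rewrite /Rinv big_distrl /=; apply: leq_sum => x _.
rewrite big_distrr /=; apply: leq_sum => y _.
case: (leqP s (x i)) => h1; case: (leqP (y i) s) => h2 //=.
by rewrite (leq_trans h2 h1).
Qed.

Lemma threshold q n (P Q : {set pt q n}) i (m : nat) :
  0 < #|P| -> m * m * Rinv P Q i <= #|P| * #|Q| ->
  exists t : nat, m * (\sum_(x in P) ((t <= x i) : nat)) <= #|P| /\
                  m * (\sum_(y in Q) ((y i < t) : nat)) <= #|Q|.
Proof.
move=> Pp H.
pose alpha t := \sum_(x in P) ((t <= x i) : nat).
have ex : exists t, m * alpha t <= #|P|.
  exists n; rewrite /alpha big1 ?muln0 // => x _.
  by rewrite leqNgt ltn_ord.
case: (ex_minnP ex) => t Ht Hmin.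
exists t; split => //.
case: t Ht Hmin => [|s] Ht Hmin.
  by rewrite big1 ?muln0 // => y _.
have Hs : #|P| < m * alpha s.
  by rewrite ltnNge; apply/negP => /Hmin; rewrite ltnn.
have L := Rinv_lower P Q i s.
have -> : \sum_(y in Q) ((y i < s.+1) : nat) = \sum_(y in Q) ((y i <= s) : nat) by [].
move: Hs L H; rewrite -/(alpha s).
set b := \sum_(y in Q) _. set a := alpha s. set R := Rinv P Q i.
set p := #|P|. set r := #|Q|. move=> Hs L H.
nia.
Qed.

Open Scope R_scope.

Lemma RplusA : associative Rplus. Proof. by move=> x y z; rewrite Rplus_assoc. Qed.
Lemma RplusC : commutative Rplus. Proof. exact: Rplus_comm. Qed.
Lemma Rplus0 : left_id 0 Rplus. Proof. exact: Rplus_0_l. Qed.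
HB.instance Definition _ := Monoid.isComLaw.Build R 0 Rplus RplusA RplusC Rplus0.

Definition ell (x : R) := x * ln x.
Definition Dd (x y : R) := ell (x + y) - ell x - ell y.

Lemma ell0 : ell 0 = 0. Proof. by rewrite /ell Rmult_0_l. Qed.
Lemma ell1 : ell 1 = 0. Proof. by rewrite /ell ln_1 Rmult_0_r. Qed.

Lemma ln_le_sub1 z : 0 < z -> ln z <= z - 1.
Proof. move=> hz; have := exp_ineq1_le (ln z); rewrite exp_ln //; lra. Qed.

Lemma ln_ge_1inv z : 0 < z -> 1 - / z <= ln z.
Proof.
move=> hz; have h := ln_le_sub1 (Rinv_0_lt_compat _ hz).
rewrite ln_Rinv // in h; lra.
Qed.

Lemma TI a b : 0 <= a -> 0 < b -> a * ln b + a - b <= ell a.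
Proof.
move=> ha hb; case: (Rle_lt_or_eq_dec 0 a ha) => [ha'|<-]; last first.
  rewrite ell0; lra.
rewrite /ell.
have h := ln_ge_1inv (Rdiv_lt_0_compat _ _ ha' hb).
rewrite /Rdiv ln_mult // ?ln_Rinv // in h; last by apply: Rinv_0_lt_compat.
have e : / (a * / b) = b / a by field; lra.
rewrite e in h.
have : a * (1 - b / a) <= a * (ln a + - ln b) by apply: Rmult_le_compat_l; lra.
have -> : a * (1 - b / a) = a - b by field; lra.
nra.
Qed.

Lemma Dd0r x : Dd x 0 = 0. Proof. by rewrite /Dd Rplus_0_r ell0; ring. Qed.
Lemma Dd0l y : Dd 0 y = 0. Proof. by rewrite /Dd Rplus_0_l ell0; ring. Qed.
Lemma Dd_sym x y : Dd x y = Dd y x. Proof. by rewrite /Dd Rplus_comm; ring. Qed.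

Lemma Dsup_core x1 y1 x2 y2 X Y s1 s2 :
  0 <= x1 -> 0 <= y1 -> 0 <= x2 -> 0 <= y2 ->
  X = x1 + x2 -> Y = y1 + y2 -> s1 = x1 + y1 -> s2 = x2 + y2 ->
  0 < X -> 0 < Y -> 0 < s1 -> 0 < s2 ->
  Dd x1 y1 + Dd x2 y2 <= Dd X Y.
Proof.
move=> h1 h2 h3 h4 eX eY es1 es2 hX hY hs1 hs2.
have hS : 0 < X + Y by lra.
have t1 := TI h1 (Rdiv_lt_0_compat _ _ (Rmult_lt_0_compat _ _ hX hs1) hS).
have t2 := TI h3 (Rdiv_lt_0_compat _ _ (Rmult_lt_0_compat _ _ hX hs2) hS).
have t3 := TI h2 (Rdiv_lt_0_compat _ _ (Rmult_lt_0_compat _ _ hY hs1) hS).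
have t4 := TI h4 (Rdiv_lt_0_compat _ _ (Rmult_lt_0_compat _ _ hY hs2) hS).
have L : forall u v, 0 < u -> 0 < v -> ln (u * v / (X + Y)) = ln u + ln v - ln (X + Y).
  move=> u v hu hv; rewrite /Rdiv ln_mult; last by apply: Rinv_0_lt_compat.
    rewrite ln_mult // ln_Rinv //; ring.
  nra.
rewrite !L // in t1 t2 t3 t4.
have eSS : X + Y = s1 + s2 by rewrite eX eY es1 es2; ring.
have E : X * s1 / (X + Y) + X * s2 / (X + Y) + Y * s1 / (X + Y) + Y * s2 / (X + Y) = X + Y.
  have h : X * s1 / (X + Y) + X * s2 / (X + Y) + Y * s1 / (X + Y) + Y * s2 / (X + Y)
    = (X + Y) * (s1 + s2) / (X + Y) by field; lra.
  rewrite h -eSS; field; lra.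
have e1 : X * ln X = x1 * ln X + x2 * ln X by rewrite {1}eX; ring.
have e2 : Y * ln Y = y1 * ln Y + y2 * ln Y by rewrite {1}eY; ring.
have e3 : s1 * ln s1 = x1 * ln s1 + y1 * ln s1 by rewrite {1}es1; ring.
have e4 : s2 * ln s2 = x2 * ln s2 + y2 * ln s2 by rewrite {1}es2; ring.
have e5 : (X + Y) * ln (X + Y) = (x1 + x2 + y1 + y2) * ln (X + Y) by rewrite {1}eX {1}eY; ring.
rewrite /Dd /ell -es1 -es2.
rewrite /ell in t1 t2 t3 t4.
rewrite e1 e2 e3 e4 e5.
have e6 : X + Y = x1 + x2 + y1 + y2 by rewrite eX eY; ring.
lra.
Qed.

Lemma Dsup x1 y1 x2 y2 : 0 <= x1 -> 0 <= y1 -> 0 <= x2 -> 0 <= y2 ->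
  Dd x1 y1 + Dd x2 y2 <= Dd (x1 + x2) (y1 + y2).
Proof.
move=> h1 h2 h3 h4.
case: (Rle_lt_or_eq_dec 0 (x1 + x2)) => [|hX|eX]; first lra; last first.
  have e1 : x1 = 0 by lra. have e2 : x2 = 0 by lra.
  by rewrite e1 e2 Rplus_0_l !Dd0l; lra.
case: (Rle_lt_or_eq_dec 0 (y1 + y2)) => [|hY|eY]; first lra; last first.
  have e1 : y1 = 0 by lra. have e2 : y2 = 0 by lra.
  by rewrite e1 e2 Rplus_0_l !Dd0r; lra.
case: (Rle_lt_or_eq_dec 0 (x1 + y1)) => [|hs1|es1]; first lra; last first.
  have e1 : x1 = 0 by lra. have e2 : y1 = 0 by lra.
  by rewrite e1 e2 !Rplus_0_l Dd0l; lra.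
case: (Rle_lt_or_eq_dec 0 (x2 + y2)) => [|hs2|es2]; first lra; last first.
  have e1 : x2 = 0 by lra. have e2 : y2 = 0 by lra.
  by rewrite e1 e2 !Rplus_0_r Dd0l; lra.
by apply: (Dsup_core h1 h2 h3 h4).
Qed.

Lemma ln_le x y : 0 < x -> x <= y -> ln x <= ln y.
Proof.
move=> hx hxy; case: (Rle_lt_or_eq_dec _ _ hxy) => [h|<-]; last lra.
by apply: Rlt_le; apply: ln_increasing.
Qed.

Lemma rsum_ge0 (I : Type) (r : seq I) (P : pred I) (f : I -> R) :
  (forall i, P i -> 0 <= f i) -> 0 <= \big[Rplus/0]_(i <- r | P i) f i.
Proof.
move=> H; elim: r => [|a r IH]; first by rewrite big_nil; lra.
rewrite big_cons; case: ifP => Pa //; have := H a Pa; lra.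
Qed.

Lemma rsum_le (I : Type) (r : seq I) (P : pred I) (f g : I -> R) :
  (forall i, P i -> f i <= g i) ->
  \big[Rplus/0]_(i <- r | P i) f i <= \big[Rplus/0]_(i <- r | P i) g i.
Proof.
move=> H; elim: r => [|a r IH]; first by rewrite !big_nil; lra.
rewrite !big_cons; case: ifP => Pa //; have := H a Pa; lra.
Qed.

Lemma Dsum (I : Type) (r : seq I) (P : pred I) (f g : I -> R) :
  (forall i, 0 <= f i) -> (forall i, 0 <= g i) ->
  \big[Rplus/0]_(i <- r | P i) Dd (f i) (g i) <=
  Dd (\big[Rplus/0]_(i <- r | P i) f i) (\big[Rplus/0]_(i <- r | P i) g i).
Proof.
move=> hf hg; elim: r => [|a r IH]; first by rewrite !big_nil Dd0l; lra.
rewrite !big_cons; case: ifP => Pa //.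
apply: Rle_trans (Dsup _ _ _ _) => //; first lra.
- by apply: rsum_ge0.
- by apply: rsum_ge0.
Qed.

Lemma Dd_small x y w N : 0 <= x -> 0 <= y -> x + y <= N -> y <= w -> 0 < w -> w <= N ->
  Dd x y <= w * ln (N / w) + w.
Proof.
move=> hx hy hN hyw hw hwN.
have hNw : 0 <= ln (N / w).
  rewrite -ln_1; apply: ln_le; first lra.
  have h : 0 <= (N - w) / w.
    apply: Rmult_le_pos; first lra. by apply: Rlt_le; apply: Rinv_0_lt_compat.
  have -> : N / w = 1 + (N - w) / w by field; lra.
  lra.
case: (Rle_lt_or_eq_dec 0 y hy) => [hy'|<-]; last by rewrite Dd0r; nra.
case: (Rle_lt_or_eq_dec 0 x hx) => [hx'|<-]; last by rewrite Dd0l; nra.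
rewrite /Dd /ell.
have a1 : ln (x + y) - ln x <= y / x.
  have := ln_le_sub1 (Rdiv_lt_0_compat (x + y) x ltac:(lra) hx').
  rewrite /Rdiv ln_mult ?ln_Rinv //; try lra; try (apply: Rinv_0_lt_compat; lra).
  have -> : (x + y) * / x - 1 = y / x by field; lra.
  lra.
have a2 : ln (x + y) <= ln N by apply: ln_le; lra.
have a3 : ln w - ln y <= w / y - 1.
  have := ln_le_sub1 (Rdiv_lt_0_compat w y hw hy').
  by rewrite /Rdiv ln_mult ?ln_Rinv //; try (apply: Rinv_0_lt_compat; lra); lra.
have eN : ln (N / w) = ln N - ln w.
  rewrite /Rdiv ln_mult ?ln_Rinv //; try lra; by apply: Rinv_0_lt_compat.
rewrite eN in hNw *.
have b1 : x * (ln (x + y) - ln x) <= y.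
  apply: Rle_trans (Rmult_le_compat_l x _ _ (Rlt_le _ _ hx') a1) _.
  right; field; lra.
have b3 : y * (ln w - ln y) <= w - y.
  apply: Rle_trans (Rmult_le_compat_l y _ _ (Rlt_le _ _ hy') a3) _.
  right; field; lra.
have b4 : y * (ln N - ln w) <= w * (ln N - ln w) by apply: Rmult_le_compat_r; lra.
have b2 : y * (ln (x + y)) <= y * ln N by apply: Rmult_le_compat_l; lra.
nra.
Qed.

Lemma ln2_gt : / 2 < ln 2. Proof. exact: ln_lt_2. Qed.

Lemma ln2_le1 : ln 2 <= 1. Proof. have := ln_le_sub1 (ltac:(lra) : 0 < 2); lra. Qed.

Lemma Dd_ab a b : 0 < a -> a <= b -> a + b <= 3 * a -> (a + b) / 6 <= Dd a b.
Proof.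
move=> ha hab h3.
have hb : 0 < b by lra.
have l2 := ln2_gt.
rewrite /Dd /ell.
have c1 : ln 2 + ln a <= ln (a + b).
  rewrite -ln_mult; try lra. apply: ln_le; lra.
have c2 : ln b <= ln (a + b) by apply: ln_le; lra.
have d1 : a * (ln 2 + ln a) <= a * ln (a + b) by apply: Rmult_le_compat_l; lra.
have d2 : b * ln b <= b * ln (a + b) by apply: Rmult_le_compat_l; lra.
have d3 : a * / 2 <= a * ln 2 by apply: Rmult_le_compat_l; lra.
nra.
Qed.

Lemma rsum_const n (K : R) : \big[Rplus/0]_(i < n) K = INR n * K.
Proof.
elim: n => [|n IH]; first by rewrite big_ord0 /=; ring.
rewrite big_ord_recr S_INR /= IH; ring.
Qed.

Lemma rsum_split (I : Type) (r : seq I) (P : pred I) (f g : I -> R) :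
  \big[Rplus/0]_(i <- r | P i) (f i + g i) =
  \big[Rplus/0]_(i <- r | P i) f i + \big[Rplus/0]_(i <- r | P i) g i.
Proof. exact: big_split. Qed.

Lemma rsum_INR (I : Type) (r : seq I) (P : pred I) (f : I -> nat) :
  INR (\sum_(i <- r | P i) f i) = \big[Rplus/0]_(i <- r | P i) INR (f i).
Proof.
elim: r => [|a r IH]; first by rewrite !big_nil.
rewrite !big_cons; case: ifP => //; rewrite plus_INR IH //.
Qed.

Lemma jensen n (c : 'I_n -> R) (N : R) : (0 < n)%nat -> 0 < N -> (forall v, 0 <= c v) ->
  \big[Rplus/0]_(v < n) c v = N ->
  N * ln (N / INR n) <= \big[Rplus/0]_(v < n) ell (c v).
Proof.
move=> hn hN hc hs.
have hn' : 0 < INR n by apply: lt_0_INR; apply/ltP.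
have hb : 0 < N / INR n by apply: Rdiv_lt_0_compat.
have := @rsum_le _ (index_enum 'I_n) xpredT
  (fun v => c v * ln (N / INR n) + c v - N / INR n) (fun v => ell (c v))
  (fun v _ => TI (hc v) hb) => H.
have e1 : forall L, \big[Rplus/0]_(v < n) (c v * L) = (\big[Rplus/0]_(v < n) c v) * L.
  move=> L; elim/big_rec2: _ => [|i y1 y2 _ ->]; ring.
have e2 : \big[Rplus/0]_(v < n) (- (N / INR n)) = - N.
  rewrite rsum_const; field; lra.
have e3 : forall v : 'I_n, c v * ln (N / INR n) + c v - N / INR n =
   c v * ln (N / INR n) + c v + - (N / INR n) by move=> v; ring.
rewrite (eq_bigr _ (fun v _ => e3 v)) !rsum_split e1 e2 hs in H.
have -> : N * ln (N / INR n) = N * ln (N / INR n) + N + - N by ring.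
exact: H.
Qed.

Close Scope R_scope.

Definition Phi q n (A : {set pt q n}) :=
  \big[Rplus/0%R]_(i < q) \big[Rplus/0%R]_(v < n) ell (INR (cnt A i v)).

Lemma ell_small (m : nat) : (m <= 1)%nat -> ell (INR m) = 0%R.
Proof. by case: m => [|[|]] //= _; [exact: ell0 | exact: ell1]. Qed.

Lemma Phi_small q n (A : {set pt q n}) : (#|A| <= 1)%nat -> Phi A = 0%R.
Proof.
move=> h; rewrite /Phi big1 // => i _; rewrite big1 // => v _.
by apply: ell_small; apply: cnt_le1.
Qed.

Lemma Phi_split q n (P Q : {set pt q n}) : P :&: Q = set0 ->
  Phi (P :|: Q) = (Phi P + Phi Q +
    \big[Rplus/0%R]_(i < q) \big[Rplus/0%R]_(v < n) Dd (INR (cnt P i v)) (INR (cnt Q i v)))%R.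
Proof.
move=> H; rewrite /Phi -!rsum_split; apply: eq_bigr => i _.
rewrite -!rsum_split; apply: eq_bigr => v _.
rewrite cnt_U // plus_INR /Dd; ring.
Qed.

Lemma sum_bool_le (T : finType) (A : {set T}) (b : pred T) :
  (\sum_(x in A) (b x : nat) <= #|A|)%nat.
Proof. by rewrite -sum1_card; apply: leq_sum => x _; case: (b x). Qed.

Lemma coord_total q n (P Q : {set pt q n}) i :
  (\big[Rplus/0%R]_(v < n) Dd (INR (cnt P i v)) (INR (cnt Q i v)) <= Dd (INR #|P|) (INR #|Q|))%R.
Proof.
have := @Dsum _ (index_enum 'I_n) xpredT (fun v => INR (cnt P i v)) (fun v => INR (cnt Q i v))
  (fun v => pos_INR _) (fun v => pos_INR _).
by rewrite -!rsum_INR !cnt_sum.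
Qed.

Lemma coord_good q n (P Q : {set pt q n}) i (m : nat) :
  (0 < #|P|)%nat -> (0 < m)%nat -> (m * m * Rinv P Q i <= #|P| * #|Q|)%nat ->
  (\big[Rplus/0%R]_(v < n) Dd (INR (cnt P i v)) (INR (cnt Q i v)) <=
   2 * (INR (#|P| + #|Q|) / INR m * ln (INR (#|P| + #|Q|) / (INR (#|P| + #|Q|) / INR m))
        + INR (#|P| + #|Q|) / INR m))%R.
Proof.
move=> hP hm H.
have [t [h1 h2]] := threshold hP H.
set NN := INR (#|P| + #|Q|).
set w := (NN / INR m)%R.
have hm' : (0 < INR m)%R by apply: lt_0_INR; apply/ltP.
have hNN : (0 < NN)%R by rewrite /NN; apply: lt_0_INR; apply/ltP; lia.
have hw : (0 < w)%R by apply: Rdiv_lt_0_compat.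
have hwN : (w <= NN)%R.
  rewrite /w; have : (1 <= INR m)%R by apply: (le_INR 1); apply/leP.
  move=> h1m; apply: (Rmult_le_reg_r (INR m)) => //.
  rewrite /Rdiv Rmult_assoc Rinv_l; last lra. nra.
rewrite (bigID (fun v : 'I_n => v < t)%nat) /=.
have E1 := cnt_sum_pred P i (fun v : 'I_n => v < t)%nat.
have E2 := cnt_sum_pred Q i (fun v : 'I_n => v < t)%nat.
have E3 := cnt_sum_pred P i (fun v : 'I_n => ~~ (v < t))%nat.
have E4 := cnt_sum_pred Q i (fun v : 'I_n => ~~ (v < t))%nat.
have nonneg : forall A (v : 'I_n), (0 <= INR (cnt A i v))%R by move=> A v; exact: pos_INR.
have D1 := @Dsum _ (index_enum 'I_n) (fun v : 'I_n => (v < t)%nat)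
  (fun v => INR (cnt P i v)) (fun v => INR (cnt Q i v)) (nonneg P) (nonneg Q).
have D2 := @Dsum _ (index_enum 'I_n) (fun v : 'I_n => ~~ (v < t)%nat)
  (fun v => INR (cnt P i v)) (fun v => INR (cnt Q i v)) (nonneg P) (nonneg Q).
rewrite -!rsum_INR E1 E2 E3 E4 in D1 D2.
set X1 := (\sum_(x in P) (x i < t : nat))%nat in D1.
set Y1 := (\sum_(y in Q) (y i < t : nat))%nat in D1.
set X2 := (\sum_(x in P) (~~ (x i < t) : nat))%nat in D2.
set Y2 := (\sum_(y in Q) (~~ (y i < t) : nat))%nat in D2.
have hX1 : (X1 <= #|P|)%nat by apply: sum_bool_le.
have hY2 : (Y2 <= #|Q|)%nat by apply: sum_bool_le.
have eX2 : X2 = (\sum_(x in P) (t <= x i : nat))%nat.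
  by apply: eq_bigr => x _; rewrite -leqNgt.
have hmY1 : (INR m * INR Y1 <= INR #|Q|)%R by rewrite -mult_INR; apply: le_INR; apply/leP.
have hmX2 : (INR m * INR X2 <= INR #|P|)%R by rewrite -mult_INR eX2; apply: le_INR; apply/leP.
have eNN : NN = (INR #|P| + INR #|Q|)%R by rewrite /NN plus_INR.
have hY1w : (INR Y1 <= w)%R.
  rewrite /w; apply: (Rmult_le_reg_r (INR m)) => //.
  rewrite /Rdiv Rmult_assoc Rinv_l; last lra.
  have := pos_INR #|P|; nra.
have hX2w : (INR X2 <= w)%R.
  rewrite /w; apply: (Rmult_le_reg_r (INR m)) => //.
  rewrite /Rdiv Rmult_assoc Rinv_l; last lra.
  have := pos_INR #|Q|; nra.
have hX1' : (INR X1 <= INR #|P|)%R by apply: le_INR; apply/leP.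
have hY2' : (INR Y2 <= INR #|Q|)%R by apply: le_INR; apply/leP.
have hY1' : (INR Y1 <= INR #|Q|)%R by apply: le_INR; apply/leP; apply: sum_bool_le.
have hX2' : (INR X2 <= INR #|P|)%R by apply: le_INR; apply/leP; apply: sum_bool_le.
have s1 : (INR X1 + INR Y1 <= NN)%R by lra.
have s2 : (INR Y2 + INR X2 <= NN)%R by lra.
have S1 := Dd_small (pos_INR X1) (pos_INR Y1) s1 hY1w hw hwN.
have S2 := Dd_small (pos_INR Y2) (pos_INR X2) s2 hX2w hw hwN.
rewrite Dd_sym in S2.
apply: Rle_trans (Rplus_le_compat _ _ _ _ D1 D2) _. lra.
Qed.

Lemma bad_count q n (P Q : {set pt q n}) (mm : nat) :
  (forall x y, x \in P -> y \in Q -> rlt (q - 1) x y) ->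
  (\sum_(i < q) ((#|P| * #|Q| < mm * Rinv P Q i)%nat : nat) <= mm)%nat.
Proof.
move=> H; have T := Rinv_total H.
set B := (\sum_(i < q) _)%nat.
have h : (B * (#|P| * #|Q| + 1) <= mm * (#|P| * #|Q|))%nat.
  rewrite /B big_distrl /=; apply: leq_trans (_ : (\sum_(i < q) mm * Rinv P Q i <= _)%nat).
    apply: leq_sum => i _; case: ltnP => //= h; lia.
  by rewrite -big_distrr /= leq_mul2l T orbT.
move: h; set p := (#|P| * #|Q|)%nat. nia.
Qed.

Lemma good_bound (k N : nat) (D : R) : (0 < N)%nat -> (INR N <= 6 * D)%R ->
  (2 * (INR N / INR (expn 2 k) * ln (INR N / (INR N / INR (expn 2 k))) + INR N / INR (expn 2 k))
   <= 12 * INR k.+1 / INR (expn 2 k) * D)%R.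
Proof.
move=> hN hD.
have hm : (0 < INR (expn 2 k))%R by apply: lt_0_INR; apply/ltP; rewrite expn_gt0.
have hN' : (0 < INR N)%R by apply: lt_0_INR; apply/ltP.
have -> : (INR N / (INR N / INR (expn 2 k)) = INR (expn 2 k))%R by field; lra.
have hl : (ln (INR (expn 2 k)) <= INR k)%R.
  have -> : INR (expn 2 k) = (2 ^ k)%R.
    clear; elim: k => [|k IH]; first by rewrite expn0 /=.
    rewrite expnS mult_INR IH /=; ring.
  rewrite ln_pow; last lra. have := ln2_le1; have := pos_INR k; nra.
rewrite S_INR.
set m := INR (expn 2 k) in hm hl *.
have e : (2 * (INR N / m * ln m + INR N / m) = 2 * INR N * (ln m + 1) / m)%R by field; lra.
rewrite e.
apply: (Rmult_le_reg_r m) => //.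
have -> : (2 * INR N * (ln m + 1) / m * m = 2 * INR N * (ln m + 1))%R by field; lra.
have -> : (12 * (INR k + 1) / m * D * m = 12 * (INR k + 1) * D)%R by field; lra.
have := pos_INR k. nra.
Qed.

Lemma final_real (B K M Qr D : R) : (0 < K)%R -> (0 < M)%R -> (0 <= D)%R -> (0 <= B)%R ->
  (B <= M * M)%R -> (2 * K * (M * M) <= Qr)%R -> (8 * (K * K) <= M)%R ->
  (B * D + Qr * (12 * K / M * D) <= 2 / K * Qr * D)%R.
Proof.
move=> hK hM hD hB hBM h1 h2.
have hQ : (0 <= Qr)%R by nra.
suff : (B + Qr * (12 * K / M) <= 2 / K * Qr)%R.
  move=> h; have := Rmult_le_compat_r D _ _ hD h; lra.
apply: (Rmult_le_reg_r (K * M)); first nra.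
have -> : ((B + Qr * (12 * K / M)) * (K * M) = B * K * M + 12 * Qr * (K * K))%R by field; lra.
have -> : (2 / K * Qr * (K * M) = 2 * Qr * M)%R by field; lra.
have a1 : (B * K * M <= Qr * M / 2)%R.
  have : (B * K * M <= (M * M) * K * M)%R by apply: Rmult_le_compat_r; [lra|]; apply: Rmult_le_compat_r; lra.
  have : ((M * M) * K * M * 2 <= Qr * M)%R by nra.
  lra.
have a2 : (12 * Qr * (K * K) <= 12 * Qr * M / 8)%R by nra.
lra.
Qed.

Lemma INR2 : INR 2 = 2%R. Proof. simpl; ring. Qed.
Lemma INR8 : INR 8 = 8%R. Proof. simpl; ring. Qed.
Lemma INR3 : INR 3 = 3%R. Proof. simpl; ring. Qed.

Lemma main_ineq q n k : (3 < q)%nat -> (2 * k.+1 * (expn 2 k * expn 2 k) <= q)%nat ->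
  (8 * (k.+1 * k.+1) <= expn 2 k)%nat ->
  forall A : {set pt q n}, comparable A -> (Phi A <= 2 / INR k.+1 * INR q * ell (INR #|A|))%R.
Proof.
move=> hq h1 h2 A.
have [N] := ubnP #|A|; elim: N A => // N IH A hAN cA.
case: (leqP #|A| 1) => hA1.
  rewrite Phi_small // ell_small // Rmult_0_r; lra.
have [P [Q [eA PQ0 hP hQ cross]]] := split_lemma hq cA.
have sP : P \subset A by rewrite eA subsetUl.
have sQ : Q \subset A by rewrite eA subsetUr.
have cP := comparable_sub sP cA. have cQ := comparable_sub sQ cA.
have hh := odd_double_half #|A|. rewrite -addnn in hh.
move: hP hQ hh; set h := #|A|./2; set o := odd #|A| => hP hQ hh.
have hPpos : (0 < #|P|)%nat by case: o hh; lia.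
have hQpos : (0 < #|Q|)%nat by case: o hh; lia.
have hPQ : (#|P| <= #|Q|)%nat by case: o hh; lia.
have hPQ3 : (#|P| + #|Q| <= 3 * #|P|)%nat by case: o hh; lia.
have cardA : #|A| = (#|P| + #|Q|)%nat by case: o hh; lia.
have IHP := IH P ltac:(lia) cP.
have IHQ := IH Q ltac:(lia) cQ.
have EPhi := Phi_split PQ0. rewrite -eA in EPhi.
set a := INR #|P|. set b := INR #|Q|.
have ha : (0 < a)%R by apply: lt_0_INR; apply/ltP.
have hab : (a <= b)%R by apply: le_INR; apply/leP.
have hab3 : (a + b <= 3 * a)%R.
  rewrite /a /b -plus_INR; have -> : (3 * INR #|P| = INR (3 * #|P|))%R.
    by rewrite mult_INR INR3.
  by apply: le_INR; apply/leP.
have Dab := Dd_ab ha hab hab3.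
set Dab' := Dd a b in Dab.
have eell : ell (INR #|A|) = (ell a + ell b + Dab')%R by rewrite cardA plus_INR -/a -/b /Dab' /Dd; ring.
set m := expn 2 k.
set G := (12 * INR k.+1 / INR m * Dab')%R.
have hm : (0 < INR m)%R by apply: lt_0_INR; apply/ltP; rewrite expn_gt0.
have hG : (0 <= G)%R.
  rewrite /G; apply: Rmult_le_pos; last lra.
  apply: Rmult_le_pos; last by apply: Rlt_le; apply: Rinv_0_lt_compat.
  have := pos_INR k.+1; lra.
pose bad (i : 'I_q) := (#|P| * #|Q| < m * m * Rinv P Q i)%nat.
have coord : forall i : 'I_q,
  (\big[Rplus/0%R]_(v < n) Dd (INR (cnt P i v)) (INR (cnt Q i v)) <= INR (bad i : nat) * Dab' + G)%R.
  move=> i; case hb : (bad i) => /=.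
    apply: Rle_trans (coord_total P Q i) _; rewrite -/a -/b -/Dab'; lra.
  have hgood : (m * m * Rinv P Q i <= #|P| * #|Q|)%nat by rewrite leqNgt; move: hb; rewrite /bad => ->.
  have hm0 : (0 < m)%nat by rewrite expn_gt0.
  have := coord_good hPpos hm0 hgood.
  have := @good_bound k (#|P| + #|Q|) Dab' ltac:(lia) ltac:(rewrite plus_INR -/a -/b; lra).
  rewrite -/m -/G. move=> X Y. apply: Rle_trans Y _. lra.
have S := @rsum_le _ (index_enum 'I_q) xpredT _ _ (fun i _ => coord i).
rewrite rsum_split in S.
have e1 : (\big[Rplus/0%R]_(i < q) (INR (bad i : nat) * Dab') =
           INR (\sum_(i < q) (bad i : nat)) * Dab')%R.
  rewrite rsum_INR; elim/big_rec2: _ => [|i y1 y2 _ ->]; ring.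
have e2 : (\big[Rplus/0%R]_(i < q) G = INR q * G)%R by rewrite rsum_const.
have hB := bad_count (m * m) cross.
have hk1 : (0 < INR k.+1)%R by apply: lt_0_INR; apply/ltP; lia.
have hD0 : (0 <= Dab')%R by lra.
have hBM : (INR (\sum_(i < q) (bad i : nat)) <= INR m * INR m)%R.
  by rewrite -mult_INR; apply: le_INR; apply/leP; exact: hB.
have H1 : (2 * INR k.+1 * (INR m * INR m) <= INR q)%R.
  have -> : (2 * INR k.+1 * (INR m * INR m) = INR (2 * k.+1 * (m * m)))%R by rewrite !mult_INR INR2.
  by apply: le_INR; apply/leP; exact: h1.
have H2 : (8 * (INR k.+1 * INR k.+1) <= INR m)%R.
  have -> : (8 * (INR k.+1 * INR k.+1) = INR (8 * (k.+1 * k.+1)))%R by rewrite !mult_INR INR8.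
  by apply: le_INR; apply/leP; exact: h2.
have fr := final_real hk1 hm hD0 (pos_INR _) hBM H1 H2.
rewrite EPhi eell.
have S' : (\big[Rplus/0%R]_(i < q) \big[Rplus/0%R]_(v < n) Dd (INR (cnt P i v)) (INR (cnt Q i v))
   <= 2 / INR k.+1 * INR q * Dab')%R.
  apply: Rle_trans S _. rewrite e1 e2. rewrite /G in fr *. lra.
rewrite -/a in IHP. rewrite -/b in IHQ. lra.
Qed.

Lemma size_bound q n k (A : {set pt q n}) : (3 < q)%nat -> (2 * k.+1 * (expn 2 k * expn 2 k) <= q)%nat ->
  (8 * (k.+1 * k.+1) <= expn 2 k)%nat -> (2 <= k)%nat -> (0 < n)%nat -> comparable A ->
  (INR #|A| <= Rpower (INR n) ((INR k + 1) / (INR k - 1)))%R.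
Proof.
move=> hq h1 h2 hk hn cA.
have hRp : (0 < Rpower (INR n) ((INR k + 1) / (INR k - 1)))%R by rewrite /Rpower; apply: exp_pos.
case: (posnP #|A|) => hA; first by rewrite hA /=; lra.
set N := INR #|A|.
have hN : (0 < N)%R by apply: lt_0_INR; apply/ltP.
have hn' : (0 < INR n)%R by apply: lt_0_INR; apply/ltP.
have hq' : (0 < INR q)%R by apply: lt_0_INR; apply/ltP; lia.
have hk' : (2 <= INR k)%R by rewrite -INR2; apply: le_INR; apply/leP.
have Hm := main_ineq hq h1 h2 cA; rewrite -/N in Hm.
have J : forall i : 'I_q, (N * ln (N / INR n) <= \big[Rplus/0%R]_(v < n) ell (INR (cnt A i v)))%R.
  move=> i; apply: (@jensen n (fun v => INR (cnt A i v)) N hn hN (fun v => pos_INR _)).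
  by rewrite -rsum_INR cnt_sum.
have J2 := @rsum_le _ (index_enum 'I_q) xpredT _ _ (fun i _ => J i).
rewrite rsum_const in J2.
have HP : (INR q * (N * ln (N / INR n)) <= 2 / INR k.+1 * INR q * ell N)%R.
  apply: Rle_trans J2 _; exact: Hm.
rewrite /ell S_INR in HP.
have eln : ln (N / INR n) = (ln N - ln (INR n))%R.
  rewrite /Rdiv ln_mult ?ln_Rinv //; by apply: Rinv_0_lt_compat.
rewrite eln in HP.
have HP2 : (ln N - ln (INR n) <= 2 / (INR k + 1) * ln N)%R.
  apply: (Rmult_le_reg_l (INR q * N)); first nra.
  have -> : (INR q * N * (2 / (INR k + 1) * ln N) = 2 / (INR k + 1) * INR q * (N * ln N))%R by field; lra.
  lra.
have HP3 : (ln N <= (INR k + 1) / (INR k - 1) * ln (INR n))%R.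
  apply: (Rmult_le_reg_l ((INR k - 1) / (INR k + 1))).
    apply: Rdiv_lt_0_compat; lra.
  have -> : ((INR k - 1) / (INR k + 1) * ((INR k + 1) / (INR k - 1) * ln (INR n)) = ln (INR n))%R
    by field; lra.
  have -> : ((INR k - 1) / (INR k + 1) * ln N = ln N - 2 / (INR k + 1) * ln N)%R by field; lra.
  lra.
rewrite /Rpower -[X in (X <= _)%R](exp_ln N hN).
case: (Rle_lt_or_eq_dec _ _ HP3) => h; last by rewrite h; lra.
by apply: Rlt_le; apply: exp_increasing.
Qed.

Lemma comparable_n2 q n (A : {set pt q n}) : (3 < q)%nat -> comparable A -> (#|A| <= n * n)%nat.
Proof.
move=> hq cA.
have h0 : (0 < q)%nat by lia. have h1 : (1 < q)%nat by lia.
pose i0 := Ordinal h0. pose i1 := Ordinal h1.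
pose f (x : pt q n) := (x i0, x i1).
have inj : {in A &, injective f}.
  move=> x y xA yA [e0 e1]; apply/eqP; apply: contraT => nxy.
  have key : forall u v : pt q n, u i0 = v i0 -> u i1 = v i1 -> rlt (q - 1) u v -> False.
    move=> u v a b H; have := rlt_compl H.
    have : [set i0; i1] \subset ~: [set i | u i < v i].
      by apply/subsetP => i; rewrite !inE => /orP[] /eqP ->; rewrite ?a ?b ltnn.
    move=> /subset_leq_card; rewrite cards2.
    have -> : (i0 != i1) by [].
    move=> s1 s2; lia.
  case/orP: (cA x y xA yA nxy) => H.
  - by case: (key x y e0 e1 H).
  - by case: (key y x (esym e0) (esym e1) H).
rewrite -(card_in_imset inj).
apply: leq_trans (max_card _) _.
by rewrite card_prod !card_ord.
Qed.

Lemma G_le q n (B : nat) : (forall S : {set pt q n}, r_comparable (q - 1) S -> (#|S| <= B)%nat) ->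
  (G q (q - 1) n <= B)%nat.
Proof. by move=> H; apply/bigmax_leqP => S; apply: H. Qed.

Lemma pairwise_comparable q n (s : seq (pt q n)) : pairwise (@rlt q n (q - 1)) s ->
  forall x y, x \in s -> y \in s -> x != y -> rlt (q - 1) x y || rlt (q - 1) y x.
Proof.
elim: s => // a s IH /= /andP[/allP Ha Hs] x y.
rewrite !inE => /orP[/eqP->|xs] /orP[/eqP->|ys].
- by rewrite eqxx.
- by rewrite Ha.
- by rewrite Ha ?orbT.
- by apply: IH.
Qed.

Lemma F_le_G q n : (3 < q)%nat -> (F q (q - 1) n <= G q (q - 1) n)%nat.
Proof.
move=> hq; apply/bigmax_leqP => N /existsP [s Hs].
have us : uniq (tval s).
  apply: (pairwise_uniq _ Hs) => x; apply/negbTE; apply: rlt_irr; lia.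
pose S := [set x in tval s].
have cS : r_comparable (q - 1) S.
  apply/forall_inP => x xS; apply/forall_inP => y yS; apply/implyP => nxy.
  by apply: (pairwise_comparable Hs); rewrite -?inE //; move: xS yS; rewrite !inE.
have cardS : #|S| = N by rewrite cardsE (card_uniqP us) size_tuple.
rewrite -cardS /G; exact: (@leq_bigmax_cond _ (fun S : {set pt q n} => r_comparable (q - 1) S) (fun S : {set pt q n} => #|S|) S cS).
Qed.

Lemma G_real q n (B : R) : (forall S : {set pt q n}, r_comparable (q - 1) S -> (INR #|S| <= B)%R) ->
  (INR (G q (q - 1) n) <= B)%R.
Proof.
move=> H.
have H0 : r_comparable (q - 1) (set0 : {set pt q n}) by apply/forall_inP => x; rewrite inE.
rewrite /G (bigmax_eq_arg _ H0); case: arg_maxnP => // S PS _; exact: H.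
Qed.

Lemma INR_expn2 m : INR (expn 2 m) = (2 ^ m)%R.
Proof.
elim: m => [|m IH]; first by rewrite expn0 /=.
rewrite expnS mult_INR IH /=; ring.
Qed.

Lemma ln_expn2 m : ln (INR (expn 2 m)) = (INR m * ln 2)%R.
Proof. by rewrite INR_expn2 ln_pow //; lra. Qed.

Lemma nat_f1 j : (8 * ((j + 11) * (j + 11)) <= expn 2 (j + 10))%nat.
Proof.
elim: j => [|j IH]; first by [].
rewrite !addSn expnS; move: IH; set e := expn 2 (j + 10); nia.
Qed.

Lemma nat_f2 k : (10 <= k)%nat -> (8 * (k.+1 * k.+1) <= expn 2 k)%nat.
Proof.
move=> hk; have := nat_f1 (k - 10).
have -> : (k - 10 + 11 = k.+1)%nat by lia.
by have -> : (k - 10 + 10 = k)%nat by lia.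
Qed.

Lemma nat_f3 k : (10 <= k)%nat -> (2 * k.+1 * (expn 2 k * expn 2 k) <= expn 2 (k * k))%nat.
Proof.
move=> hk; have h := nat_f2 hk.
have a : (2 * k.+1 <= expn 2 k)%nat by lia.
apply: (@leq_trans (expn 2 k * (expn 2 k * expn 2 k))); first by rewrite leq_mul2r a orbT.
rewrite -!expnD; apply: leq_pexp2l => //; nia.
Qed.

Lemma choose_k q : (expn 2 100 <= q)%nat ->
  exists k, [/\ (10 <= k)%nat, (expn 2 (k * k) <= q)%nat & (q < expn 2 (k.+1 * k.+1))%nat].
Proof.
move=> hq.
have ex : exists k, (expn 2 (k * k) <= q)%nat by exists 10.
have ub : forall k, (expn 2 (k * k) <= q)%nat -> (k <= q)%nat.
  move=> k hk; apply: leq_trans hk; apply: ltnW; apply: leq_trans (ltn_expl k (isT : 1 < 2)) _.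
  apply: leq_pexp2l => //; nia.
case: (ex_maxnP ex ub) => k Pk Hmax.
exists k; split => //.
- by apply: Hmax.
- rewrite ltnNge; apply/negP => /Hmax; lia.
Qed.

Lemma theorem_part1 (q n : nat) : (4 <= q)%nat -> (0 < n)%nat ->
  (F q (q - 1) n <= G q (q - 1) n)%nat /\
  (INR (G q (q - 1) n) <= Rpower (INR n) (1 + 10 / sqrt (ln (INR q) / ln 2)))%R.
Proof.
move=> hq hn; split; first by apply: F_le_G.
have l2 : (0 < ln 2)%R by have := ln2_gt; lra.
have hq' : (4 <= INR q)%R.
  have -> : 4%R = INR 4 by simpl; ring.
  by apply: le_INR; apply/leP.
have hlq : (0 < ln (INR q))%R by rewrite -ln_1; apply: ln_increasing; lra.
set L := (ln (INR q) / ln 2)%R.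
have hL : (0 < L)%R by apply: Rdiv_lt_0_compat.
have hsL : (0 < sqrt L)%R by apply: sqrt_lt_R0.
have hn1 : (1 <= INR n)%R.
  have -> : 1%R = INR 1 by [].
  by apply: le_INR; apply/leP.
case: (ltnP q (expn 2 100)) => hbig.
- (* small q: trivial bound n^2 *)
  have hL100 : (L < 100)%R.
    rewrite /L; apply: (Rmult_lt_reg_r (ln 2)) => //.
    rewrite /Rdiv Rmult_assoc Rinv_l; last lra.
    have : (ln (INR q) < ln (INR (expn 2 100)))%R.
      apply: ln_increasing; first lra. by apply: lt_INR; apply/ltP.
    rewrite ln_expn2; have -> : INR 100 = 100%R by simpl; ring.
    lra.
  have hs10 : (sqrt L < 10)%R.
    rewrite -(sqrt_square 10); last lra.
    apply: sqrt_lt_1; lra.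
  have hexp : (2 <= 1 + 10 / sqrt L)%R.
    have : (1 < 10 / sqrt L)%R.
      apply: (Rmult_lt_reg_r (sqrt L)) => //.
      rewrite /Rdiv Rmult_assoc Rinv_l; lra.
    lra.
  apply: G_real => S cS.
  have := comparable_n2 hq (r_comparableP cS) => hS.
  apply: Rle_trans (_ : (Rpower (INR n) 2 <= _)%R); last by apply: Rle_Rpower.
  rewrite -INR2 Rpower_pow; last lra.
  have -> : (INR n ^ 2 = INR (n * n))%R by rewrite mult_INR /=; ring.
  by apply: le_INR; apply/leP.
- have [k [hk hkq hqk]] := choose_k hbig.
  have h2 := nat_f2 hk.
  have h1 : (2 * k.+1 * (expn 2 k * expn 2 k) <= q)%nat := leq_trans (nat_f3 hk) hkq.
  have hk' : (10 <= INR k)%R.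
    have -> : 10%R = INR 10 by simpl; ring.
    by apply: le_INR; apply/leP.
  have hLk : (L < (INR k + 1) * (INR k + 1))%R.
    rewrite /L; apply: (Rmult_lt_reg_r (ln 2)) => //.
    rewrite /Rdiv Rmult_assoc Rinv_l; last lra.
    have : (ln (INR q) < ln (INR (expn 2 (k.+1 * k.+1))))%R.
      apply: ln_increasing; first lra. by apply: lt_INR; apply/ltP.
    rewrite ln_expn2 mult_INR S_INR. lra.
  have hsk : (sqrt L < INR k + 1)%R.
    rewrite -(sqrt_square (INR k + 1)); last lra.
    apply: sqrt_lt_1; lra.
  have hexp : ((INR k + 1) / (INR k - 1) <= 1 + 10 / sqrt L)%R.
    have a : (10 / (INR k + 1) <= 10 / sqrt L)%R.
      apply: Rmult_le_compat_l; first lra.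
      apply: Rinv_le_contravar => //; lra.
    have b : ((INR k + 1) / (INR k - 1) <= 1 + 10 / (INR k + 1))%R.
      apply: (Rmult_le_reg_r ((INR k - 1) * (INR k + 1))); first nra.
      have -> : ((INR k + 1) / (INR k - 1) * ((INR k - 1) * (INR k + 1)) = (INR k + 1) * (INR k + 1))%R
        by field; lra.
      have -> : ((1 + 10 / (INR k + 1)) * ((INR k - 1) * (INR k + 1)) = (INR k - 1) * (INR k + 1) + 10 * (INR k - 1))%R
        by field; lra.
      nra.
    lra.
  apply: G_real => S cS.
  apply: Rle_trans (size_bound hq h1 h2 _ hn (r_comparableP cS)) _; first lia.
  by apply: Rle_Rpower.
Qed.

Theorem theorem1p2 :
  (exists C : R, (0 < C)%R /\
     forall q n : nat, (4 <= q)%N -> (0 < n)%N ->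
       (F q (q - 1) n <= G q (q - 1) n)%N /\
       (INR (G q (q - 1) n) <=
          Rpower (INR n) (1 + C / sqrt (ln (INR q) / ln 2)))%R)
  /\
  (forall eps : R, (0 < eps)%R ->
     exists q0 : nat, forall q n : nat, (q0 <= q)%N -> (0 < n)%N ->
       (F q (q - 1) n <= G q (q - 1) n)%N /\
       (INR (G q (q - 1) n) <= Rpower (INR n) (1 + eps))%R).
Proof.
split.
  exists 10%R; split; first lra.
  by move=> q n hq hn; apply: theorem_part1.
move=> eps heps.
have [K hK] := INR_unbounded (10 / eps).
have hK0 : (0 < INR K)%R.
  have : (0 < 10 / eps)%R by apply: Rdiv_lt_0_compat; lra.
  lra.
exists (maxn 4 (expn 2 (K * K))) => q n hq hn.
have hq4 : (4 <= q)%nat by move: hq; rewrite geq_max => /andP[].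
have hqK : (expn 2 (K * K) <= q)%nat by move: hq; rewrite geq_max => /andP[].
have [hF hG] := theorem_part1 hq4 hn.
split => //.
apply: Rle_trans hG _.
have hn1 : (1 <= INR n)%R.
  have -> : 1%R = INR 1 by [].
  by apply: le_INR; apply/leP.
apply: Rle_Rpower => //.
have l2 : (0 < ln 2)%R by have := ln2_gt; lra.
have hq' : (0 < INR q)%R by apply: lt_0_INR; apply/ltP; lia.
set L := (ln (INR q) / ln 2)%R.
have hLK : (INR K * INR K <= L)%R.
  rewrite /L; apply: (Rmult_le_reg_r (ln 2)) => //.
  have -> : (ln (INR q) / ln 2 * ln 2 = ln (INR q))%R by field; lra.
  have : (ln (INR (expn 2 (K * K))) <= ln (INR q))%R.
    apply: ln_le; first by apply: lt_0_INR; apply/ltP; rewrite expn_gt0.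
    by apply: le_INR; apply/leP.
  rewrite ln_expn2 mult_INR. lra.
have hsL : (INR K <= sqrt L)%R.
  rewrite -(sqrt_square (INR K)); last lra.
  by apply: sqrt_le_1_alt.
have hsL0 : (0 < sqrt L)%R by lra.
have : (10 / sqrt L <= 10 / INR K)%R.
  apply: Rmult_le_compat_l; first lra.
  by apply: Rinv_le_contravar.
have : (10 / INR K < eps)%R.
  apply: (Rmult_lt_reg_r (INR K)) => //.
  rewrite /Rdiv Rmult_assoc Rinv_l; last lra.
  have : (10 / eps * eps < INR K * eps)%R by apply: Rmult_lt_compat_r.
  have -> : (10 / eps * eps = 10)%R by field; lra.
  lra.
lra.
Qed.
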